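(* $\mathrm{WM}\preceq F_{\mathrm{weak}}\preceq \mathrm{WL}_{3/2}$. That is, for all graphs $G,H$: if $\mathrm{WL}_{3/2}(G)=\mathrm{WL}_{3/2}(H)$ then $F_{\mathrm{weak}}(G)=F_{\mathrm{weak}}(H)$, and if $F_{\mathrm{weak}}(G)=F_{\mathrm{weak}}(H)$ then $\mathrm{WM}(G)=\mathrm{WM}(H)$.
   Context: Graphs are finite, simple and undirected; an $n$-vertex graph $G$ has $V(G)=\{1,\dots,n\}$ and adjacency matrix $A$. $\mathrm{Spec}(G)$ is the multiset of eigenvalues of $A$. Let $\mu_1<\dots<\mu_m$ be the distinct eigenvalues, $P_i$ the orthogonal projection matrix onto the eigenspace of $\mu_i$, $P_*(x,y)=(P_1(x,y),\dots,P_m(x,y))$. Fürer's weak spectral invariant is $F_{\mathrm{weak}}(G)=\big(\mathrm{Spec}(G),\{\!\{(P_*(x,x),\{\!\{P_*(x,y)\}\!\}_{y\in V(G)})\}\!\}_{x\in V(G)}\big)$, where $\{\!\{\cdot\}\!\}$ denotes a multiset. Let $w_k(x,y)$ be the number of walks of length $k$ from $x$ to $y$. The walk matrix has entries $W(x,k)=\sum_{y}w_k(x,y)$ for $0\le k\le n-1$, and $\mathrm{WM}(G)=\{\!\{(W(x,0),\dots,W(x,n-1))\}\!\}_{x\in V(G)}$. Color refinement (1-WL) on a vertex-colored graph: $C^0(x)$ is the color of $x$ (uniform if the graph is uncolored), and $C^{r+1}(x)=\big(C^r(x),\{\!\{C^r(y)\}\!\}_{y\in N(x)}\big)$, where $N(x)$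 is the neighborhood. $\mathrm{WL}_1(G)=\{\!\{C^n(x)\}\!\}_{x\in V(G)}$. For a vertex $x$, $G_x$ is $G$ with $x$ individualized, i.e. $x$ receives a special new color (the same special color for every choice of $x$) and the other vertices keep their colors. $\mathrm{WL}_{3/2}(G)=\{\!\{\mathrm{WL}_1(G_x)\}\!\}_{x\in V(G)}$. *)

(* Defs.v *)
From HB Require Import structures.
From mathcomp Require Import all_boot all_order all_algebra all_field.
Set Implicit Arguments.
Unset Strict Implicit.
Unset Printing Implicit Defensive.
Import Order.TTheory GRing.Theory Num.Theory.

(* A finite multiset over a countable type is represented canonically by
   the list of its elements sorted along the injective encoding [pickle];
   two lists give the same [mset] iff they are permutations of each other.
   Hence "multiset {{ ... }} equal" is Leibniz equality of [mset]s. *)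
Definition mset (T : countType) (s : seq T) : seq T :=
  sort (fun a b : T => (pickle a <= pickle b)%N) s.

Record graph := Graph {
  gn : nat;
  gadj : rel 'I_gn;
  gadj_sym : symmetric gadj;
  gadj_irr : irreflexive gadj }.

Section GraphInvariants.
Variable G : graph.
Local Notation n := (gn G).
Local Notation V := ('I_n).
Local Notation e := (@gadj G).

Definition nwalks (k : nat) (x y : V) : nat :=
  #|[pred s : k.-tuple V | path e x s && (last x s == y)]|.

Definition Wm (x : V) (k : nat) : nat := \sum_(y : V) nwalks k x y.

Definition WM : seq (seq nat) :=
  mset [seq [seq Wm x k | k <- iota 0 n] | x <- enum V].

Local Open Scope ring_scope.

Definition adjmx : 'M[algC]_n := \matrix_(i, j) (e i j)%:R.

Definition spectrum : seq algC :=
  mset (sval (closed_field_poly_normal (char_poly adjmx))).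

(* distinct eigenvalues mu_1 < ... < mu_m (they are real) *)
Definition distinct_eigs : seq algC := sort <=%R (undup spectrum).

(* orthogonal (Hermitian) projection onto the row space of E:
   with M := (row_base E)^T (columns form a basis), P = M (M^* M)^-1 M^*. *)
Definition orthproj (E : 'M[algC]_n) : 'M[algC]_n :=
  let B := row_base E in
  (B^T *m invmx (map_mx Num.conj B *m B^T)) *m map_mx Num.conj B.

Definition eigproj (mu : algC) : 'M[algC]_n := orthproj (eigenspace adjmx mu).

Definition Pstar (x y : V) : seq algC :=
  [seq eigproj mu x y | mu <- distinct_eigs].

Definition Fweak : seq algC * seq (seq algC * seq (seq algC)) :=
  (spectrum,
   mset [seq (Pstar x x, mset [seq Pstar x y | y <- enum V]) | x <- enum V]).

Local Close Scope ring_scope.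

(* Colours are finite trees: initial colour [GenTree.Leaf c];
   C^{r+1}(x) = (C^r(x), {{C^r(y)}}_{y in N(x)}) is encoded injectively as
   [GenTree.Node 0 (C^r(x) :: mset [seq C^r y | y in N(x)])]. *)
Definition color := GenTree.tree nat.

Fixpoint refine (c0 : V -> nat) (r : nat) (x : V) : color :=
  match r with
  | 0 => GenTree.Leaf (c0 x)
  | r'.+1 => GenTree.Node 0
      (refine c0 r' x :: mset [seq refine c0 r' y | y <- enum V & e x y])
  end.

Definition WL1_col (c0 : V -> nat) : seq color :=
  mset [seq refine c0 n x | x <- enum V].

Definition WL1 : seq color := WL1_col (fun _ => 0%N).

Definition indiv (x : V) : V -> nat := fun y => if y == x then 1%N else 0%N.

Definition WL32 : seq (seq color) :=
  mset [seq WL1_col (indiv x) | x <- enum V].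

End GraphInvariants.

(* Main.v *)
Require Import Defs.
From mathcomp Require Import all_boot all_order all_algebra all_field.
From mathcomp Require Import ring zify.

Set Implicit Arguments.
Unset Strict Implicit.
Unset Printing Implicit Defensive.
Import Order.TTheory GRing.Theory Num.Theory.

Section Mset.
Variable T : countType.
Let le := (fun a b : T => (pickle a <= pickle b)%N).
Lemma le_total : total le. Proof. by move=> a b; rewrite /le leq_total. Qed.
Lemma le_trans' : transitive le. Proof. by move=> a b c; rewrite /le; apply: leq_trans. Qed.
Lemma le_anti : antisymmetric le.
Proof. by move=> a b; rewrite /le -eqn_leq => /eqP E; apply: (pcan_inj (@pickleK_inv T)). Qed.

Lemma msetP (s t : seq T) : reflect (mset s = mset t) (perm_eq s t).
Proof. exact: (perm_sortP le_total le_trans' le_anti). Qed.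

Lemma perm_mset (s : seq T) : perm_eq (mset s) s.
Proof. by rewrite /mset perm_sort. Qed.

Lemma size_mset (s : seq T) : size (mset s) = size s.
Proof. exact: size_sort. Qed.

End Mset.

Lemma mset_map (T U : countType) (f : T -> U) (s t : seq T) :
  mset s = mset t -> mset (map f s) = mset (map f t).
Proof.
move=> E; apply/msetP; apply: perm_map; exact/msetP.
Qed.

Lemma mset_map_mset (T U : countType) (f : T -> U) (s : seq T) :
  mset (map f (mset s)) = mset (map f s).
Proof. apply/msetP; apply: perm_map; exact: perm_mset. Qed.

Lemma mset1 (T : countType) (x : T) : mset [:: x] = [:: x].
Proof. by []. Qed.

Section Walks.
Variable G : graph.
Local Notation n := (gn G).
Local Notation V := ('I_n).
Local Notation e := (@gadj G).

Lemma nwalksE k (x y : V) :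
  nwalks k x y = \sum_(s : k.-tuple V) (path e x s && (last x s == y)).
Proof.
rewrite /nwalks -sum1_card big_mkcond /=; apply: eq_bigr => s _.
by rewrite inE; case: ifP.
Qed.

Lemma nwalks0 (x y : V) : nwalks 0 x y = (x == y).
Proof.
rewrite nwalksE (big_pred1 [tuple]) //= => s.
rewrite (tuple0 s); apply/esym/eqP; exact: val_inj.
Qed.

Lemma nwalksS k (x y : V) :
  nwalks k.+1 x y = \sum_(z : V) (e x z) * nwalks k z y.
Proof.
rewrite nwalksE.
rewrite (reindex (fun p : V * k.-tuple V => [tuple of p.1 :: p.2])) /=; last first.
  exists (fun s : k.+1.-tuple V => (thead s, behead_tuple s)) => [[z t] _|s _] /=.
    by congr (_, _); apply: val_inj.
  by apply: val_inj; case: s => [[|a s] //= _].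
rewrite -(pair_big xpredT xpredT (fun z (t : k.-tuple V) => nat_of_bool ((e x z && path e z t) && (last z t == y)))) /=.
apply: eq_bigr => z _.
rewrite nwalksE big_distrr /=; apply: eq_bigr => t _.
by rewrite -andbA; case: (e x z); rewrite ?mul1n ?mul0n.
Qed.

End Walks.

Fixpoint base (t : color) : nat :=
  match t with
  | GenTree.Leaf c => (c == 1)
  | GenTree.Node _ l => if l is c :: _ then base c else 0
  end.

Fixpoint cw (k : nat) (t : color) : nat :=
  match k with
  | 0 => base t
  | k'.+1 => if t is GenTree.Node _ (_ :: l) then sumn (map (cw k') l) else 0
  end.

Section Colours.
Variable G : graph.
Local Notation n := (gn G).
Local Notation V := ('I_n).
Local Notation e := (@gadj G).

Lemma base_refine (c0 : V -> nat) r y : base (refine c0 r y) = (c0 y == 1).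
Proof. by elim: r => [|r IH] //=. Qed.

Lemma sum_filter_enum (F : V -> nat) (P : pred V) :
  sumn [seq F z | z <- enum V & P z] = \sum_(z : V) P z * F z.
Proof.
rewrite sumnE big_map big_filter big_mkcond /= -big_enum /=.
by apply: eq_bigr => z _; case: (P z); rewrite ?mul1n ?mul0n.
Qed.

Lemma cw_refine (x : V) k : forall r (y : V), (k <= r)%N ->
  cw k (refine (indiv x) r y) = nwalks k y x.
Proof.
elim: k => [|k IH] r y kr.
  by rewrite /= base_refine nwalks0 /indiv; case: (y == x).
case: r kr => [//|r] kr /=.
rewrite (perm_sumn (perm_map _ (perm_mset _))) -map_comp.
rewrite (eq_map (g := fun z => nwalks k z x)); last by move=> z /=; apply: IH.
by rewrite sum_filter_enum nwalksS.
Qed.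

End Colours.

Set Implicit Arguments.
Unset Strict Implicit.
Unset Printing Implicit Defensive.
Import Order.TTheory GRing.Theory Num.Theory.
Local Open Scope ring_scope.

Section Newton.
Definition psum (a : seq algC) (k : nat) : algC := \sum_(x <- a) x ^+ k.
Definition Pa (a : seq algC) : {poly algC} := \prod_(x <- a) ('X - x%:P).

Lemma size_Pa a : size (Pa a) = (size a).+1.
Proof. exact: size_prod_XsubC. Qed.

Lemma quot_coef (P Q : {poly algC}) (x : algC) (N : nat) :
  P = Q * ('X - x%:P) -> (size Q <= N)%N ->
  forall j, Q`_j = \sum_(k < N) P`_(j + 1 + k) * x ^+ k.
Proof.
move=> PQ sQ j.
have rec i : Q`_i = P`_(i.+1) + x * Q`_(i.+1).
  rewrite PQ mulrBr coefB coefMX coefMC /=; ring.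
suff H t : Q`_j = \sum_(k < t) P`_(j + 1 + k) * x ^+ k + Q`_(j + t) * x ^+ t.
  by rewrite (H N) (nth_default 0 (leq_trans sQ (leq_addl _ _))) mul0r addr0.
elim: t => [|t IH]; first by rewrite big_ord0 add0r addn0 expr0 mulr1.
rewrite IH big_ord_recr /= rec -addrA; congr (_ + _).
rewrite addn1 addnS exprSr; ring.
Qed.

Lemma XsubC_neq0 (x : algC) : ('X - x%:P) != 0.
Proof. by rewrite polyXsubC_eq0. Qed.

Lemma deriv_Pa a : (Pa a)^`() = \sum_(x <- a) (Pa a %/ ('X - x%:P)).
Proof.
elim: a => [|y a IH]; first by rewrite /Pa !big_nil derivC.
rewrite /Pa big_cons -/(Pa a) derivM derivXsubC mul1r big_cons.
rewrite mulKp ?XsubC_neq0 // IH big_distrr /=; congr (_ + _).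
rewrite big_seq_cond [RHS]big_seq_cond; apply: eq_bigr => x /andP[xa _].
have: ('X - x%:P) %| Pa a by rewrite dvdp_XsubCl root_prod_XsubC.
move=> /divpK {2}<-; rewrite mulrA mulpK ?XsubC_neq0 //.
Qed.

Lemma newton_id a (i : nat) :
  i%:R * (Pa a)`_i = \sum_(k < (size a).+1) (Pa a)`_(i + k) * psum a k.
Proof.
set N := (size a).+1.
have qc x : x \in a -> forall j,
    (Pa a %/ ('X - x%:P))`_j = \sum_(k < N) (Pa a)`_(j + 1 + k) * x ^+ k.
  move=> xa; apply: quot_coef.
    by apply/esym/divpK; rewrite dvdp_XsubCl root_prod_XsubC.
  by rewrite (leq_trans (leq_divp _ _)) // size_Pa.
have swap F : \sum_(k < N) (Pa a)`_(F k) * psum a k =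
    \sum_(x <- a) \sum_(k < N) (Pa a)`_(F k) * x ^+ k.
  rewrite exchange_big /=; apply: eq_bigr => k _.
  by rewrite /psum big_distrr.
case: i => [|j].
  rewrite mul0r (swap (fun k : 'I_N => 0 + k)%N) big_seq big1 // => x xa.
  have: root (Pa a) x by rewrite root_prod_XsubC.
  rewrite /root (@horner_coef_wide _ N) ?size_Pa // => /eqP H.
  by rewrite -[RHS]H; apply: eq_bigr => k _; rewrite add0n.
rewrite mulr_natl -coef_deriv deriv_Pa coef_sum.
rewrite (swap (fun k : 'I_N => j.+1 + k)%N) big_seq [RHS]big_seq.
apply: eq_bigr => x xa; rewrite qc //.
by apply: eq_bigr => k _; rewrite addn1.
Qed.

Lemma psum0 a : psum a 0 = (size a)%:R.
Proof.
elim: a => [|x a IH]; first by rewrite /psum big_nil.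
by rewrite /psum big_cons -/(psum a 0) IH expr0 /= -add1n natrD.
Qed.

Lemma Pa_monic a : Pa a \is monic.
Proof. exact: monic_prod_XsubC. Qed.

Lemma newton_eq a b : size a = size b ->
  (forall k, (0 < k <= size a)%N -> psum a k = psum b k) -> Pa a = Pa b.
Proof.
move=> sab hp; set n := size a.
have hp' k : (k < n.+1)%N -> psum a k = psum b k.
  case: k => [_|k kn]; first by rewrite !psum0 sab.
  by apply: hp; rewrite ltnS in kn; rewrite kn.
suff H t : forall i, (n <= i + t)%N -> (Pa a)`_i = (Pa b)`_i.
  by apply/polyP => i; apply: (H n); rewrite leq_addl.
elim: t => [|t IH] i.
  rewrite addn0 leq_eqVlt => /orP[/eqP <-|ni].
    have := Pa_monic a; have := Pa_monic b; rewrite !monicE !lead_coefE.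
    by rewrite !size_Pa -sab /= => /eqP -> /eqP ->.
  by rewrite !nth_default // ?size_Pa -?sab.
have [nit|] := leqP n (i + t); first by move=> _; apply: IH.
rewrite addnS => int nit.
have e1 := newton_id a i; have e2 := newton_id b i.
rewrite -sab -/n in e2; rewrite -/n in e1.
move: e1 e2; rewrite !big_ord_recl /= !addn0 !psum0 -sab -/n.
have -> : \sum_(k < n) (Pa a)`_(i + bump 0 k) * psum a (bump 0 k) =
          \sum_(k < n) (Pa b)`_(i + bump 0 k) * psum b (bump 0 k).
  apply: eq_bigr => k _; rewrite hp' ?ltnS //; congr (_ * _); apply: IH.
  by rewrite /bump /=; lia.
move=> e1 e2.
have : (i%:R - n%:R) * (Pa a)`_i = (i%:R - n%:R) * (Pa b)`_i.
  rewrite !mulrBl e1 e2; ring.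
move/mulfI; apply; rewrite subr_eq0 eqr_nat neq_ltn.
by rewrite (leq_trans _ int) // ltnS leq_addr.
Qed.
End Newton.

Set Implicit Arguments.
Unset Strict Implicit.
Unset Printing Implicit Defensive.
Import Order.TTheory GRing.Theory Num.Theory.
Local Open Scope ring_scope.

Section Lag.
Variable s : seq algC.
Definition lag (mu : algC) : {poly algC} :=
  (\prod_(nu <- s | nu != mu) (mu - nu))^-1 *: \prod_(nu <- s | nu != mu) ('X - nu%:P).

Lemma lag_eval mu x :
  (lag mu).[x] = (\prod_(nu <- s | nu != mu) (mu - nu))^-1 * \prod_(nu <- s | nu != mu) (x - nu).
Proof. by rewrite /lag hornerZ horner_prod; congr (_ * _); apply: eq_bigr => nu _; rewrite hornerXsubC. Qed.

Lemma lag_self mu : (lag mu).[mu] = 1.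
Proof.
rewrite lag_eval mulVf //; rewrite prodf_seq_neq0; apply/allP => nu _.
by apply/implyP => H; rewrite subr_eq0 eq_sym.
Qed.

Lemma lag_other mu x : uniq s -> x \in s -> x != mu -> (lag mu).[x] = 0.
Proof.
move=> us xs xmu; rewrite lag_eval; apply/eqP; rewrite mulf_eq0; apply/orP; right.
rewrite -big_filter (bigD1_seq x) /=.
- by rewrite subrr mul0r.
- by rewrite mem_filter xmu.
- exact: filter_uniq.
Qed.

Lemma size_lag mu : (size (lag mu) <= (size s).+1)%N.
Proof.
rewrite (leq_trans (size_scale_leq _ _)) // -big_filter size_prod_XsubC ltnS.
by rewrite size_filter count_size.
Qed.

Lemma lag_real mu : {in s, forall nu, nu \is Num.real} -> mu \is Num.real ->
  lag mu \is a polyOver Num.real.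
Proof.
move=> sr mur; rewrite /lag; apply: polyOverZ.
  rewrite rpredV big_seq_cond; apply: rpred_prod => nu /andP[nus _].
  by rewrite rpredB // sr.
by rewrite big_seq_cond; apply: rpred_prod => nu /andP[nus _]; rewrite polyOverXsubC sr.
Qed.
End Lag.

Section ConjMx.
Local Notation cj := (map_mx (@Num.conj algC)).
Lemma c_mul m p q (X : 'M[algC]_(m, p)) (Y : 'M_(p, q)) : cj (X *m Y) = cj X *m cj Y.
Proof.
apply/matrixP => i k; rewrite !mxE rmorph_sum; apply: eq_bigr => l _.
by rewrite !mxE rmorphM.
Qed.
Lemma c_T m p (X : 'M[algC]_(m, p)) : cj X^T = (cj X)^T.
Proof. by apply/matrixP => i k; rewrite !mxE. Qed.
Lemma cT_mul m p q (X : 'M[algC]_(m, p)) (Y : 'M_(p, q)) :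
  cj ((X *m Y)^T) = cj Y^T *m cj X^T.
Proof. by rewrite trmx_mul c_mul. Qed.
Lemma cc m p (X : 'M[algC]_(m, p)) : cj (cj X) = X.
Proof. by apply/matrixP => i k; rewrite !mxE conjCK. Qed.
Lemma cT_inv m (X : 'M[algC]_m) : cj (invmx X)^T = invmx (cj X^T).
Proof. by rewrite trmx_inv; exact: map_invmx. Qed.
End ConjMx.

Section Spectral.
Variable G : graph.
Local Notation n := (gn G).
Local Notation V := ('I_n).
Local Notation e := (@gadj G).
Local Notation A := (adjmx G).

Lemma adj_entry (x y : V) : A x y = (e x y)%:R.
Proof. by rewrite mxE. Qed.

Lemma adj_pow k (x y : V) : (A ^+ k) x y = (nwalks k x y)%:R.
Proof.
elim: k x y => [|k IH] x y.
  by rewrite expr0 mxE nwalks0; case: (x == y).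
rewrite exprS -mulmxE mxE nwalksS natr_sum; apply: eq_bigr => z _.
by rewrite adj_entry IH natrM.
Qed.

Lemma adj_tr : A^T = A.
Proof. by apply/matrixP => x y; rewrite !mxE gadj_sym. Qed.

Lemma adj_conj : map_mx Num.conj A = A.
Proof. by apply/matrixP => x y; rewrite !mxE conjC_nat. Qed.

Lemma adj_herm : A \is hermsymmx.
Proof.
by rewrite qualifE /= expr0 scale1r adj_tr adj_conj.
Qed.

Lemma pow_tr k : (A ^+ k)^T = A ^+ k.
Proof.
elim: k => [|k IH]; first by rewrite !expr0 tr_scalar_mx.
by rewrite exprS -mulmxE trmx_mul IH adj_tr mulmxE -exprSr exprS.
Qed.

Lemma nwalks_sym k (x y : V) : nwalks k x y = nwalks k y x.
Proof.
apply/eqP; rewrite -(eqr_nat algC) -!adj_pow; apply/eqP.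
by rewrite -{1}(pow_tr k) mxE.
Qed.

Definition U := spectralmx A.
Definition d := spectral_diag A.

Lemma U_unit : U \in unitmx.
Proof. exact: spectral_unit. Qed.

Lemma A_decomp : A = invmx U *m diag_mx d *m U.
Proof. exact/orthomx_spectralP/hermitian_normalmx/adj_herm. Qed.

Lemma d_real j : d 0 j \is Num.real.
Proof.
have := hermitian_spectral_diag_real adj_herm.
by move/mxOverP => /(_ 0 j).
Qed.


Definition pe (p : {poly algC}) : 'M[algC]_n := \sum_(i < size p) p`_i *: A ^+ i.
Definition Dg (p : {poly algC}) : 'M[algC]_n := diag_mx (\row_j p.[d 0 j]).

Lemma pe_entry p (x y : V) :
  pe p x y = \sum_(i < size p) p`_i * (nwalks i x y)%:R.
Proof.
rewrite /pe summxE; apply: eq_bigr => i _; by rewrite mxE adj_pow.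
Qed.

Lemma diag_mul (r s : 'rV[algC]_n) :
  diag_mx r *m diag_mx s = diag_mx (\row_j (r 0 j * s 0 j)).
Proof.
apply/matrixP => i j; rewrite mul_diag_mx !mxE.
by case: (i == j); rewrite ?mulr1n ?mulr0n ?mulr0.
Qed.

Lemma pow_decomp k : A ^+ k = invmx U *m diag_mx (\row_j d 0 j ^+ k) *m U.
Proof.
elim: k => [|k IH].
  rewrite expr0 (_ : \row_j _ = const_mx 1); last by apply/rowP => j; rewrite !mxE expr0.
  by rewrite diag_const_mx mulmx1 mulVmx // U_unit.
rewrite exprS -mulmxE IH {1}A_decomp.
rewrite -!mulmxA (mulmxA U) mulmxV ?U_unit // mul1mx !mulmxA -[invmx U *m diag_mx d *m _]mulmxA diag_mul.
by congr (_ *m diag_mx _ *m _); apply/rowP => j; rewrite !mxE exprS.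
Qed.

Lemma peE p : pe p = invmx U *m Dg p *m U.
Proof.
rewrite /pe (eq_bigr (fun i : 'I_(size p) => invmx U *m (p`_i *: diag_mx (\row_j d 0 j ^+ i)) *m U)); last first.
  by move=> i _; rewrite pow_decomp scalemxAl scalemxAr.
rewrite -mulmx_suml -mulmx_sumr; congr (_ *m _ *m _).
apply/matrixP => a b; rewrite summxE !mxE horner_coef.
case: (eqVneq a b) => [->|ne].
  rewrite mulr1n; apply: eq_bigr => i _; by rewrite !mxE eqxx mulr1n.
rewrite mulr0n big1 // => i _; by rewrite !mxE (negPf ne) mulr0n mulr0.
Qed.

Lemma peM p q : pe (p * q) = pe p *m pe q.
Proof.
rewrite !peE -!mulmxA (mulmxA U) mulmxV ?U_unit // mul1mx /Dg (mulmxA (diag_mx _)) diag_mul.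
by rewrite !mulmxA; congr (_ *m diag_mx _ *m _); apply/rowP => j; rewrite !mxE hornerM.
Qed.

Lemma pe_eq p q : (forall j, p.[d 0 j] = q.[d 0 j]) -> pe p = pe q.
Proof.
by move=> H; rewrite !peE /Dg; congr (_ *m diag_mx _ *m _); apply/rowP => j; rewrite !mxE H.
Qed.

Lemma peX k : pe ('X ^+ k) = A ^+ k.
Proof.
rewrite peE pow_decomp /Dg; congr (_ *m diag_mx _ *m _); apply/rowP => j.
by rewrite !mxE hornerXn.
Qed.

Lemma peD p q : pe (p + q) = pe p + pe q.
Proof.
rewrite !peE -mulmxDl -mulmxDr /Dg; congr (_ *m _ *m _).
apply/matrixP => a b; rewrite !mxE hornerD.
by case: (a == b); rewrite ?mulr1n ?mulr0n ?addr0.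
Qed.

Lemma peZ c p : pe (c *: p) = c *: pe p.
Proof.
rewrite !peE scalemxAl scalemxAr /Dg; congr (_ *m _ *m _).
apply/matrixP => a b; rewrite !mxE hornerZ.
by case: (a == b); rewrite ?mulr1n ?mulr0n ?mulr0.
Qed.

Lemma pe0 : pe 0 = 0.
Proof. by rewrite /pe size_poly0 big_ord0. Qed.

Lemma pe_sum (I : Type) (r : seq I) (F : I -> {poly algC}) :
  pe (\sum_(i <- r) F i) = \sum_(i <- r) pe (F i).
Proof.
elim: r => [|i r IH]; first by rewrite !big_nil pe0.
by rewrite !big_cons peD IH.
Qed.

Lemma trace_pow k : \tr (A ^+ k) = \sum_(j < n) d 0 j ^+ k.
Proof.
rewrite pow_decomp mxtrace_mulC mulmxA mulmxV ?U_unit // mul1mx mxtrace_diag.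
by apply: eq_bigr => j _; rewrite mxE.
Qed.


Lemma char_poly_conj (M W : 'M[algC]_n) : W \in unitmx ->
  char_poly (invmx W *m M *m W) = char_poly M.
Proof.
move=> Wu; rewrite /char_poly /char_poly_mx.
set Wp := map_mx polyC W; set Wip := map_mx polyC (invmx W).
have WW : Wip *m Wp = 1%:M by rewrite -map_mxM mulVmx // map_mx1.
have -> : 'X%:M - map_mx polyC (invmx W *m M *m W) =
          Wip *m ('X%:M - map_mx polyC M) *m Wp.
  rewrite mulmxBr mulmxBl !map_mxM -/Wp -/Wip; congr (_ - _).
  by rewrite scalar_mxC -mulmxA WW mulmx1.
rewrite !det_mulmx mulrC mulrA -det_mulmx mulmxE.
by rewrite -mulmxE -map_mxM mulmxV // map_mx1 det1 mul1r.
Qed.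

Definition dl := [seq d 0 j | j <- enum V].

Lemma char_poly_Pa : char_poly A = Pa dl.
Proof.
rewrite {1}A_decomp char_poly_conj ?U_unit // char_poly_trig ?diag_mx_is_trig //.
rewrite /Pa big_map big_enum /=; apply: eq_bigr => j _; by rewrite mxE eqxx mulr1n.
Qed.

Lemma psum_dl k : psum dl k = \sum_(x : V) (nwalks k x x)%:R.
Proof.
rewrite /psum big_map big_enum /= -trace_pow /mxtrace; apply: eq_bigr => x _.
by rewrite adj_pow.
Qed.

Lemma mem_dl (mu : algC) : (mu \in dl) = root (char_poly A) mu.
Proof. by rewrite char_poly_Pa root_prod_XsubC. Qed.

Lemma spec_prop : char_poly A = \prod_(z <- spectrum G) ('X - z%:P).
Proof.
rewrite /spectrum; case: closed_field_poly_normal => r /= E.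
rewrite {1}E (monicP (char_poly_monic A)) scale1r; apply: perm_big; rewrite perm_sym.
by rewrite /mset perm_sort.
Qed.

Lemma size_spectrum : size (spectrum G) = n.
Proof.
have := size_char_poly A; rewrite spec_prop size_prod_XsubC.
by case.
Qed.

Lemma mem_spectrum mu : (mu \in spectrum G) = (mu \in dl).
Proof. by rewrite mem_dl spec_prop root_prod_XsubC. Qed.

Lemma mem_de mu : (mu \in distinct_eigs G) = (mu \in dl).
Proof. by rewrite /distinct_eigs mem_sort mem_undup mem_spectrum. Qed.

Lemma de_uniq : uniq (distinct_eigs G).
Proof. by rewrite /distinct_eigs sort_uniq undup_uniq. Qed.

Lemma size_de : (size (distinct_eigs G) <= n)%N.
Proof.
by rewrite /distinct_eigs size_sort -[X in (_ <= X)%N]size_spectrum size_undup.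
Qed.

Lemma dl_real mu : mu \in dl -> mu \is Num.real.
Proof. by case/mapP => j _ ->; apply: d_real. Qed.

Lemma d_in_de j : d 0 j \in distinct_eigs G.
Proof. by rewrite mem_de; apply: map_f; rewrite mem_enum. Qed.

Local Notation s := (distinct_eigs G).

Lemma de_real mu : mu \in s -> mu \is Num.real.
Proof. by rewrite mem_de; apply: dl_real. Qed.

Lemma pe_real p : p \is a polyOver Num.real -> map_mx Num.conj (pe p) = pe p.
Proof.
move=> /polyOverP pr; apply/matrixP => x y; rewrite mxE !pe_entry rmorph_sum.
apply: eq_bigr => i _; rewrite rmorphM rmorph_nat; congr (_ * _).
exact/CrealP.
Qed.

Lemma pe_tr p : (pe p)^T = pe p.
Proof.
apply/matrixP => x y; rewrite mxE !pe_entry; apply: eq_bigr => i _.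
by rewrite nwalks_sym.
Qed.

Lemma rowpe (m : nat) (W : 'M[algC]_(m, n)) (mu : algC) :
  W *m A = mu *: W -> forall p, W *m pe p = p.[mu] *: W.
Proof.
move=> WA p.
have Wk k : W *m A ^+ k = mu ^+ k *: W.
  elim: k => [|k IH]; first by rewrite expr0 mulmx1 scale1r.
  by rewrite exprSr -mulmxE mulmxA IH -scalemxAl WA scalerA exprSr.
rewrite /pe mulmx_sumr horner_coef scaler_suml; apply: eq_bigr => i _.
by rewrite -scalemxAr Wk scalerA.
Qed.

Lemma sum_eig k : A ^+ k = \sum_(mu <- s) mu ^+ k *: pe (lag s mu).
Proof.
under eq_bigr do rewrite -peZ.
rewrite -pe_sum -peX; apply: pe_eq => j.
rewrite hornerXn horner_sum (bigD1_seq (d 0 j)) ?d_in_de ?de_uniq //=.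
rewrite hornerZ lag_self mulr1 big1_seq ?addr0 // => mu /andP[mud mus].
by rewrite hornerZ lag_other ?mulr0 ?de_uniq ?d_in_de // eq_sym.
Qed.

Lemma eigprojE mu : mu \in s -> eigproj G mu = pe (lag s mu).
Proof.
move=> mus; have mur := de_real mus.
have Lr : lag s mu \is a polyOver Num.real by apply: lag_real => //; exact: de_real.
set L := lag s mu; set Q := pe L.
rewrite /eigproj /orthproj /=.
set E := eigenspace A mu; set B := row_base E.
have Bfree : row_free B := row_base_free E.
have BE : (B :=: E)%MS := eq_row_base E.
clearbody B.
set Bc := map_mx Num.conj B.
set Gm := Bc *m B^T; set P := B^T *m invmx Gm *m Bc.
have BA : B *m A = mu *: B by apply/eigenspaceP; rewrite BE.
have BcA : Bc *m A = mu *: Bc.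
  by rewrite -adj_conj /Bc -map_mxM BA map_mxZ; congr (_ *: _); exact/CrealP.
have BcQ : Bc *m Q = Bc by rewrite /Q (rowpe BcA) /L lag_self scale1r.
have PQ : P *m Q = P by rewrite /P -mulmxA BcQ.
have QA : Q *m A = mu *: Q.
  rewrite -[A]expr1 -peX -peM -peZ; apply: pe_eq => j.
  rewrite hornerM (hornerZ mu) hornerXn expr1.
  have [->|ne] := eqVneq (d 0 j) mu; first by rewrite mulrC.
  by rewrite /L lag_other ?de_uniq ?d_in_de // mul0r mulr0.
have : (Q <= B)%MS by rewrite BE; apply/eigenspaceP.
case/submxP => Y QY.
have Qc : map_mx Num.conj Q = Q by apply: pe_real.
have QYc : Q = map_mx Num.conj Y *m Bc by rewrite -Qc QY c_mul.
have BcB : map_mx Num.conj Bc = B by rewrite /Bc cc.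
have Gu : Gm \in unitmx.
  rewrite -row_free_unit -kermx_eq0; apply/rowV0P => v /sub_kermxP vG.
  set w := v *m Bc.
  have w0 : w = 0.
    apply/eqP; apply: contraT => wn0; have := dotmx_is_dotmx wn0.
    rewrite dotmxE.
    have -> : w *m map_mx Num.conj (w^T) = 0.
      by rewrite /w cT_mul !c_T BcB mulmxA -(mulmxA v) -c_T vG mul0mx.
    by rewrite mxE ltxx.
  apply/eqP; rewrite -(mulmx_free_eq0 _ (_ : row_free Bc)) -/w ?w0 //.
  by rewrite /row_free mxrank_map.
have QP : Q *m P = Q.
  by rewrite QYc /P !mulmxA -[_ *m Bc *m B^T]mulmxA -/Gm mulmxK.
have Ph : map_mx Num.conj P^T = P.
  rewrite /P !cT_mul cT_inv /Gm cT_mul !c_T !trmxK BcB.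
  by rewrite !mulmxA.
have := congr1 (fun M => map_mx Num.conj M^T) QP.
rewrite /= cT_mul Ph pe_tr Qc PQ => ->.
by [].
Qed.

End Spectral.

Set Implicit Arguments.
Unset Strict Implicit.
Unset Printing Implicit Defensive.
Import Order.TTheory GRing.Theory Num.Theory.
Local Open Scope ring_scope.

Definition Psi (s : seq algC) (w : seq nat) : seq algC :=
  [seq \sum_(i < size w) (lag s mu)`_i * (nth 0%N w i)%:R | mu <- s].

Definition cwv (N : nat) (t : color) : seq nat := [seq cw k t | k <- iota 0 N.+1].

Definition Phi (l : seq color) : seq (seq nat) * seq (seq nat) :=
  (mset [seq cwv (size l) t | t <- l & base t == 1%N], mset [seq cwv (size l) t | t <- l]).

Definition Psi2 (s : seq algC) (D : seq (seq nat) * seq (seq nat)) :=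
  (head [::] (map (Psi s) D.1), mset (map (Psi s) D.2)).

Definition hk (k : nat) (D : seq (seq nat) * seq (seq nat)) : nat :=
  nth 0%N (head [::] D.1) k.

Definition gk (sp : seq algC) (k : nat) (v : seq algC) : algC :=
  \sum_(i < size v) (nth 0 (sort <=%R (undup sp)) i) ^+ k * nth 0 v i.

Definition Theta (sp : seq algC) (D : seq algC * seq (seq algC)) : seq algC :=
  [seq \sum_(v <- D.2) gk sp k v | k <- iota 0 (size sp)].

Section PerGraph.
Variable G : graph.
Local Notation n := (gn G).
Local Notation V := ('I_n).
Local Notation s := (distinct_eigs G).

Definition wv (x y : V) : seq nat := [seq nwalks k x y | k <- iota 0 n.+1].
Definition DG (x : V) := (mset [:: wv x x], mset [seq wv x y | y <- enum V]).

Lemma nth_wv (x y : V) i : (i < n.+1)%N -> nth 0%N (wv x y) i = nwalks i x y.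
Proof. by move=> ?; rewrite /wv (nth_map 0%N) ?size_iota // nth_iota. Qed.

Lemma pe_wide (p : {poly algC}) N (x y : V) : (size p <= N)%N ->
  pe G p x y = \sum_(i < N) p`_i * (nwalks i x y)%:R.
Proof.
move=> sp; rewrite pe_entry (big_ord_widen N (fun i => p`_i * (nwalks i x y)%:R)) //.
rewrite big_mkcond; apply: eq_bigr => i _; case: ifP => // /negbT.
by rewrite -leqNgt => H; rewrite nth_default // mul0r.
Qed.

Lemma Pstar_Psi (x y : V) : Pstar x y = Psi s (wv x y).
Proof.
rewrite /Pstar /Psi; apply/eq_in_map => mu mus; rewrite eigprojE // /wv size_map size_iota.
rewrite (@pe_wide _ n.+1); last by rewrite (leq_trans (size_lag _ _)) // ltnS size_de.
by apply: eq_bigr => i _; rewrite -/(wv x y) nth_wv.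
Qed.

Lemma size_WL1 (c0 : V -> nat) : size (WL1_col c0) = n.
Proof. by rewrite /WL1_col size_mset size_map size_enum_ord. Qed.

Lemma Phi_WL (x : V) : Phi (WL1_col (indiv x)) = DG x.
Proof.
rewrite /Phi size_WL1 /DG.
have cr (y : V) : cwv n (refine (indiv x) n y) = wv x y.
  apply/eq_in_map => k; rewrite mem_iota add0n ltnS => kn.
  by rewrite cw_refine // nwalks_sym.
congr (_, _).
  rewrite /WL1_col; apply/msetP.
  apply: (perm_trans (perm_map _ (perm_filter _ (perm_mset _)))).
  rewrite filter_map -map_comp.
  have -> : [seq y <- enum V | preim (refine (indiv x) n) (fun t => base t == 1%N) y] = [:: x].
    rewrite -(filter_pred1_uniq (enum_uniq V) (mem_enum V x)); apply: eq_filter => y /=.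
    by rewrite base_refine /indiv; case: (y == x).
  by rewrite /= cr.
rewrite /WL1_col mset_map_mset -map_comp.
by congr mset; apply: eq_map => y /=; rewrite cr.
Qed.


Lemma WL_D : mset [seq Phi t | t <- WL32 G] = mset [seq DG x | x <- enum V].
Proof.
rewrite /WL32 mset_map_mset -map_comp; congr mset; apply: eq_map => x /=.
exact: Phi_WL.
Qed.

Lemma size_WL32 : size (WL32 G) = n.
Proof. by rewrite /WL32 size_mset size_map size_enum_ord. Qed.

Lemma trace_hk k : (k <= n)%N ->
  sumn (map (hk k) (mset [seq DG x | x <- enum V])) = (\sum_(x : V) nwalks k x x)%N.
Proof.
move=> kn; rewrite (perm_sumn (perm_map _ (perm_mset _))) -map_comp sumnE big_map big_enum /=.
by apply: eq_bigr => x _; rewrite /hk /DG /= nth_wv.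
Qed.

Lemma psum_dl_nat k : psum (dl G) k = (\sum_(x : V) nwalks k x x)%N%:R.
Proof. by rewrite psum_dl natr_sum. Qed.

Lemma size_dl : size (dl G) = n.
Proof. by rewrite /dl size_map size_enum_ord. Qed.

Lemma Fweak2_D : (Fweak G).2 = mset [seq Psi2 s (DG x) | x <- enum V].
Proof.
rewrite /Fweak /=; congr mset; apply: eq_map => x.
rewrite /Psi2 /DG /= Pstar_Psi mset_map_mset; congr (_, mset _).
by rewrite -[RHS]map_comp; apply: eq_map => y /=; rewrite Pstar_Psi.
Qed.

Lemma Wm_eig (x : V) k :
  (Wm x k)%:R = \sum_(v <- mset [seq Pstar x y | y <- enum V]) gk (spectrum G) k v.
Proof.
rewrite (perm_big _ (perm_mset _)) big_map big_enum /= /Wm natr_sum.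
apply: eq_bigr => y _; rewrite -adj_pow sum_eig summxE.
rewrite /gk -/(distinct_eigs G) /Pstar size_map (big_nth 0) big_mkord.
apply: eq_bigr => i _; rewrite mxE (nth_map 0) // eigprojE // mem_nth //.
Qed.

Lemma WM_Theta :
  mset (map (map (fun m : nat => m%:R : algC)) (WM G)) =
  mset (map (Theta (spectrum G)) (Fweak G).2).
Proof.
rewrite /WM /Fweak /= !mset_map_mset -!map_comp; congr mset; apply: eq_map => x /=.
rewrite /Theta /= size_spectrum -map_comp; apply: eq_map => k /=.
exact: Wm_eig.
Qed.

End PerGraph.

Lemma natr_seq_inj : injective (map (fun m : nat => m%:R : algC)).
Proof.
apply: inj_map => a b /eqP; rewrite eqr_nat => /eqP //.
Qed.

Theorem corollary4p5 (G H : graph) :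
  (WL32 G = WL32 H -> Fweak G = Fweak H) /\ (Fweak G = Fweak H -> WM G = WM H).
Proof.
split.
- move=> E.
  have nGH : gn G = gn H by rewrite -(size_WL32 G) -(size_WL32 H) E.
  have ED : mset [seq DG x | x <- enum 'I_(gn G)] = mset [seq DG x | x <- enum 'I_(gn H)].
    by rewrite -WL_D -WL_D E.
  have Etr k : (k <= gn G)%N ->
      (\sum_(x : 'I_(gn G)) nwalks k x x)%N = (\sum_(x : 'I_(gn H)) nwalks k x x)%N.
    move=> kn; rewrite -(trace_hk kn) ED trace_hk //; by rewrite -nGH.
  have Esp : spectrum G = spectrum H.
    have EP : Pa (dl G) = Pa (dl H).
      apply: newton_eq; first by rewrite !size_dl.
      move=> k /andP[_ kn]; rewrite !psum_dl_nat Etr //; by rewrite -(size_dl G).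
    by rewrite /spectrum (char_poly_Pa G) (char_poly_Pa H) EP.
  have Ede : distinct_eigs G = distinct_eigs H by rewrite /distinct_eigs Esp.
  have -> : Fweak G = (spectrum G, (Fweak G).2) by [].
  have -> : Fweak H = (spectrum H, (Fweak H).2) by [].
  rewrite !Fweak2_D Esp Ede !(map_comp (Psi2 _) (@DG _)); congr pair.
  exact: mset_map.
- move=> E.
  have Esp : spectrum G = spectrum H by have := congr1 fst E.
  have E2 : (Fweak G).2 = (Fweak H).2 by rewrite E.
  have : mset (map (map (fun m : nat => m%:R : algC)) (WM G)) =
         mset (map (map (fun m : nat => m%:R : algC)) (WM H)).
    by rewrite !WM_Theta Esp E2.
  move/msetP/(perm_map_inj natr_seq_inj) => P.
  rewrite /WM; apply/msetP.
  apply: perm_trans (perm_trans _ P) _; rewrite ?perm_mset // perm_sym perm_mset //.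
Qed.
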